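(* For $M,N\in\Lambda$, if $M\to_{\mathsf v}N$ then $\mathcal A(M)=\mathcal A(N)$.
   Context: $\lambda$-terms and values are $M,N::=V\mid MN$, $V::=x\mid\lambda x.M$, up to $\alpha$-conversion. Rules: $(\beta_v)$ $(\lambda x.M)V\to M\{x:=V\}$ if $V$ is a value; $(\sigma_1)$ $(\lambda x.M)NP\to(\lambda x.MP)N$ if $x\notin\mathrm{FV}(P)$; $(\sigma_3)$ $V((\lambda x.M)N)\to(\lambda x.VM)N$ if $V$ is a value and $x\notin\mathrm{FV}(V)$. $\to_{\mathsf v}$ is the contextual closure of their union and $\twoheadrightarrow_{\mathsf v}$ its reflexive-transitive closure. $\Lambda_\bot$ is the set of $\lambda$-terms possibly containing a constant $\bot$; $\sqsubseteq$ is the smallest context-closed preorder on $\Lambda_\bot$ with $\bot\sqsubseteq x$ and $\bot\sqsubseteq\lambda x.M$. Approximants $\mathcal A$ ($k\ge0$): $A::=B\mid C$; $B::=x\mid\lambda x.A\mid\bot\mid xBA_1\cdots A_k$; $C::=(\lambda x.A)(yBA_1\cdots A_k)$. $\mathcal A(M)=\{A\in\mathcal A\mid\exists N'\in\Lambda,\ M\twoheadrightarrow_{\mathsf v}N',\ A\sqsubseteq N'\}$. *)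

(* Defs.v *)
(* Lambda-terms with de Bruijn indices (alpha-conversion built in). *)
From Stdlib Require Import Arith Relations.

Inductive term : Type :=
| Var : nat -> term
| Lam : term -> term
| App : term -> term -> term
| Bot : term.

(* Lambda = the Bot-free terms. *)
Fixpoint pure (t : term) : Prop :=
  match t with
  | Var _ => True
  | Lam M => pure M
  | App M N => pure M /\ pure N
  | Bot => False
  end.

Definition is_value (t : term) : Prop :=
  match t with
  | Var _ | Lam _ => True
  | _ => False
  end.

Fixpoint shift (d c : nat) (t : term) : term :=
  match t with
  | Var i => if i <? c then Var i else Var (i + d)
  | Lam M => Lam (shift d (S c) M)
  | App M N => App (shift d c M) (shift d c N)
  | Bot => Bot
  end.

(* subst k u t : capture-avoiding substitution of u for index k in t
   (indices above k are decremented, since the binder is consumed). *)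
Fixpoint subst (k : nat) (u : term) (t : term) : term :=
  match t with
  | Var i => if i <? k then Var i
             else if i =? k then shift k 0 u
             else Var (i - 1)
  | Lam M => Lam (subst (S k) u M)
  | App M N => App (subst k u M) (subst k u N)
  | Bot => Bot
  end.

(* lifting a term under one new binder: since the bound variable is fresh,
   this encodes the side conditions x notin FV(P), x notin FV(V). *)
Definition lift1 (t : term) : term := shift 1 0 t.

Inductive step : term -> term -> Prop :=
| step_beta : forall M V, is_value V ->
    step (App (Lam M) V) (subst 0 V M)
| step_sigma1 : forall M N P,
    step (App (App (Lam M) N) P) (App (Lam (App M (lift1 P))) N)
| step_sigma3 : forall V M N, is_value V ->
    step (App V (App (Lam M) N)) (App (Lam (App (lift1 V) M)) N)
| step_lam : forall M M', step M M' -> step (Lam M) (Lam M')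
| step_appl : forall M M' N, step M M' -> step (App M N) (App M' N)
| step_appr : forall M N N', step N N' -> step (App M N) (App M N').

Definition steps : term -> term -> Prop := clos_refl_trans term step.

Inductive approx_le : term -> term -> Prop :=
| le_refl : forall M, approx_le M M
| le_trans : forall M N P, approx_le M N -> approx_le N P -> approx_le M P
| le_bot_var : forall x, approx_le Bot (Var x)
| le_bot_lam : forall M, approx_le Bot (Lam M)
| le_lam : forall M M', approx_le M M' -> approx_le (Lam M) (Lam M')
| le_appl : forall M M' N, approx_le M M' -> approx_le (App M N) (App M' N)
| le_appr : forall M N N', approx_le N N' -> approx_le (App M N) (App M N').

(* Approximants:
   A ::= B | C
   B ::= x | \x.A | Bot | x B A_1 ... A_k
   C ::= (\x.A) (y B A_1 ... A_k)
   is_spine t  <->  t = x B A_1 ... A_k  (k >= 0). *)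
Inductive is_A : term -> Prop :=
| A_B : forall t, is_B t -> is_A t
| A_C : forall t, is_C t -> is_A t
with is_B : term -> Prop :=
| B_var : forall x, is_B (Var x)
| B_lam : forall a, is_A a -> is_B (Lam a)
| B_bot : is_B Bot
| B_spine : forall t, is_spine t -> is_B t
with is_spine : term -> Prop :=
| spine_base : forall x b, is_B b -> is_spine (App (Var x) b)
| spine_app : forall s a, is_spine s -> is_A a -> is_spine (App s a)
with is_C : term -> Prop :=
| C_redex : forall a s, is_A a -> is_spine s -> is_C (App (Lam a) s).

Definition approximants (M : term) (A : term) : Prop :=
  is_A A /\ exists N', pure N' /\ steps M N' /\ approx_le A N'.

(* Main.v *)
Require Import Defs.
From Stdlib Require Import Arith Lia Relations.

Ltac dec := repeat (simpl; match goal with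
  | |- context [?a <? ?b] => destruct (Nat.ltb_spec a b)
  | |- context [?a =? ?b] => destruct (Nat.eqb_spec a b)
  end); simpl.

Lemma shift_comb : forall t d d' c c', c' <= c -> c <= c' + d' ->
  shift d c (shift d' c' t) = shift (d + d') c' t.
Proof.
  induction t; intros d d' c c' H1 H2; simpl.
  - dec; f_equal; lia.
  - f_equal. apply IHt; lia.
  - f_equal; auto.
  - auto.
Qed.

Lemma shift_comm : forall t d d' c c', c' <= c ->
  shift d' c' (shift d c t) = shift d (c + d') (shift d' c' t).
Proof.
  induction t; intros d d' c c' H1; simpl.
  - dec; f_equal; lia.
  - f_equal. replace (S (c + d')) with (S c + d') by lia. apply IHt; lia.
  - f_equal; auto.
  - auto.
Qed.

Lemma shift_subst : forall t u d c k, k <= c ->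
  shift d c (subst k u t) = subst k (shift d (c - k) u) (shift d (S c) t).
Proof.
  induction t; intros u d c k H; simpl.
  - dec; try (f_equal; lia); try lia.
    + subst. rewrite (shift_comm u d k (c - k) 0) by lia. f_equal. lia.
  - f_equal. rewrite IHt by lia. f_equal.
  - f_equal; auto.
  - auto.
Qed.

Lemma subst_shift_cancel : forall t u d c k, c <= k -> k <= c + d ->
  subst k u (shift (S d) c t) = shift d c t.
Proof.
  induction t; intros u d c k H1 H2; simpl.
  - dec; f_equal; lia.
  - f_equal. apply IHt; lia.
  - f_equal; auto.
  - auto.
Qed.

Lemma subst_shift_comm : forall t u c k, c <= k ->
  subst (S k) u (shift 1 c t) = shift 1 c (subst k u t).
Proof.
  induction t; intros u c k H; simpl.
  - dec; try (f_equal; lia); try lia.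
    subst. rewrite shift_comb by lia. reflexivity.
  - f_equal. apply IHt; lia.
  - f_equal; auto.
  - auto.
Qed.

Lemma subst_shift_gen : forall v u j c k, c <= k ->
  subst (k + j) u (shift j c v) = shift j c (subst k u v).
Proof.
  induction v; intros u j c k H; simpl.
  - dec; try (f_equal; lia); try lia.
    subst. rewrite shift_comb by lia. f_equal; lia.
  - f_equal. replace (S (k + j)) with (S k + j) by lia. apply IHv; lia.
  - f_equal; auto.
  - auto.
Qed.

Lemma subst_subst : forall t u v j k, j <= k ->
  subst k u (subst j v t) = subst j (subst (k - j) u v) (subst (S k) u t).
Proof.
  induction t; intros u v j k H; simpl.
  - dec; try (f_equal; lia); try lia.
    + pose proof (subst_shift_gen v u j 0 (k - j) ltac:(lia)) as E.
      replace (k - j + j) with k in E by lia. exact E.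
    + rewrite subst_shift_cancel by lia. reflexivity.
  - f_equal. rewrite IHt by lia. reflexivity.
  - f_equal; auto.
  - auto.
Qed.

Lemma shift_value : forall t d c, is_value t -> is_value (shift d c t).
Proof. destruct t; simpl; intros; auto. destruct (n <? c); exact I. Qed.

Lemma subst_value : forall t u k, is_value t -> is_value u -> is_value (subst k u t).
Proof.
  destruct t; simpl; intros; auto.
  destruct (n <? k); [exact I|]. destruct (n =? k); [apply shift_value; auto| exact I].
Qed.

Lemma shift_pure : forall t d c, pure t -> pure (shift d c t).
Proof. induction t; simpl; intuition. destruct (n <? c); exact I. Qed.

Lemma subst_pure : forall t u k, pure t -> pure u -> pure (subst k u t).
Proof.
  induction t; simpl; intuition.
  destruct (n <? k); [exact I|]. destruct (n =? k); [apply shift_pure; auto| exact I].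
Qed.

Inductive star (R : term -> term -> Prop) : term -> term -> Prop :=
| star_refl : forall a, star R a a
| star_step : forall a b c, R a b -> star R b c -> star R a c.

Lemma star_trans : forall R a b c, star R a b -> star R b c -> star R a c.
Proof. intros R a b c H; induction H; intros; eauto using star. Qed.

Lemma star_one : forall (R : term -> term -> Prop) a b, R a b -> star R a b.
Proof. intros; eauto using star. Qed.

Lemma star_map : forall (R : term -> term -> Prop) f,
  (forall a b, R a b -> R (f a) (f b)) -> forall a b, star R a b -> star R (f a) (f b).
Proof. intros R f Hf a b H; induction H; eauto using star. Qed.

Lemma star_mono : forall (R S : term -> term -> Prop),
  (forall a b, R a b -> star S a b) -> forall a b, star R a b -> star S a b.
Proof. intros R S HS a b H; induction H; eauto using star, star_trans. Qed.

Definition confluent (R : term -> term -> Prop) :=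
  forall a b c, R a b -> R a c -> exists d, R b d /\ R c d.

Lemma strip : forall R, confluent R ->
  forall a b c, R a b -> star R a c -> exists d, star R b d /\ R c d.
Proof.
  intros R HR a b c H1 H2. revert b H1. induction H2; intros x Hx.
  - exists x; split. apply star_refl. exact Hx.
  - destruct (HR _ _ _ H Hx) as [d [Hd1 Hd2]].
    destruct (IHstar _ Hd1) as [e [He1 He2]].
    exists e; split; eauto using star.
Qed.
Lemma diamond_star : forall R, confluent R -> confluent (star R).
Proof.
  intros R HR a b c H1. revert c. induction H1; intros x Hx.
  - exists x; split; [exact Hx | apply star_refl].
  - destruct (strip R HR _ _ _ H Hx) as [d [Hd1 Hd2]].
    destruct (IHstar _ Hd1) as [e [He1 He2]].
    exists e; split; eauto using star.
Qed.

Lemma confluent_transfer : forall (R S : term -> term -> Prop),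
  (forall a b, R a b -> S a b) -> (forall a b, S a b -> star R a b) ->
  confluent (star S) -> confluent (star R).
Proof.
  intros R S H1 H2 HS a b c Hb Hc.
  assert (E : forall x y, star R x y -> star S x y) by (apply star_mono; eauto using star_one).
  destruct (HS a b c (E _ _ Hb) (E _ _ Hc)) as [d [Hd1 Hd2]].
  exists d; split; eapply star_mono; eauto.
Qed.

Inductive bstep : term -> term -> Prop :=
| b_beta : forall M V, is_value V -> bstep (App (Lam M) V) (subst 0 V M)
| b_lam : forall M M', bstep M M' -> bstep (Lam M) (Lam M')
| b_appl : forall M M' N, bstep M M' -> bstep (App M N) (App M' N)
| b_appr : forall M N N', bstep N N' -> bstep (App M N) (App M N').

Inductive sstep : term -> term -> Prop :=
| s_1 : forall M N P, sstep (App (App (Lam M) N) P) (App (Lam (App M (lift1 P))) N)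
| s_3 : forall V M N, is_value V -> sstep (App V (App (Lam M) N)) (App (Lam (App (lift1 V) M)) N)
| s_lam : forall M M', sstep M M' -> sstep (Lam M) (Lam M')
| s_appl : forall M M' N, sstep M M' -> sstep (App M N) (App M' N)
| s_appr : forall M N N', sstep N N' -> sstep (App M N) (App M N').

Inductive par : term -> term -> Prop :=
| par_var : forall i, par (Var i) (Var i)
| par_bot : par Bot Bot
| par_lam : forall M M', par M M' -> par (Lam M) (Lam M')
| par_app : forall M M' N N', par M M' -> par N N' -> par (App M N) (App M' N')
| par_beta : forall M M' V V', is_value V -> par M M' -> par V V' ->
    par (App (Lam M) V) (subst 0 V' M').

Lemma par_refl : forall t, par t t.
Proof. induction t; constructor; auto. Qed.

Lemma par_value : forall V V', par V V' -> is_value V -> is_value V'.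
Proof. intros V V' H; destruct H; simpl; intros; auto; contradiction. Qed.

Lemma par_shift : forall M M', par M M' -> forall d c, par (shift d c M) (shift d c M').
Proof.
  intros M M' H; induction H; intros d c; simpl; try constructor; auto.
  - destruct (i <? c); constructor.
  - rewrite shift_subst by lia. rewrite Nat.sub_0_r.
    apply par_beta; auto. apply shift_value; auto.
Qed.

Lemma par_subst : forall M M', par M M' -> forall V V' k, par V V' -> is_value V ->
  par (subst k V M) (subst k V' M').
Proof.
  intros M M' H; induction H; intros W W' k HW HWv; simpl; try constructor; auto.
  - destruct (i <? k); [constructor|]. destruct (i =? k); [apply par_shift; auto|constructor].
  - rewrite subst_subst by lia. rewrite Nat.sub_0_r.
    apply par_beta; auto. apply subst_value; auto.
Qed.

Lemma par_confluent : confluent par.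
Proof.
  intros a b c H1. revert c. induction H1; intros c H2.
  - inversion H2; subst. exists (Var i); split; constructor.
  - inversion H2; subst. exists Bot; split; constructor.
  - inversion H2; subst. edestruct IHpar as [d [? ?]]; [eassumption|].
    exists (Lam d); split; constructor; auto.
  - inversion H2 as [| |? ? Hx|? ? ? ? Ha Hb|K K2 W W2 Hv HK HW]; subst.
    + destruct (IHpar1 _ Ha) as [d [? ?]]. destruct (IHpar2 _ Hb) as [e [? ?]].
      exists (App d e); split; constructor; auto.
    + inversion H1_ as [| |K1' K1 HK1| |]; subst.
      destruct (IHpar1 (Lam K2)) as [d [Hd1 Hd2]]; [constructor; auto|].
      inversion Hd1 as [| |? Q HQ1| |]; subst. inversion Hd2 as [| |? ? HQ2| |]; subst.
      destruct (IHpar2 _ HW) as [e [? ?]].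
      exists (subst 0 e Q); split.
      * apply par_beta; auto. eapply par_value; eauto.
      * apply par_subst; auto. eapply par_value; eauto.
  - inversion H2 as [| |? ? Hx|? ? ? ? Ha Hb|K K2 W W2 Hv HK HW]; subst.
    + inversion Ha as [| |? K2 HK2| |]; subst.
      destruct (IHpar1 _ HK2) as [d [? ?]]. destruct (IHpar2 _ Hb) as [e [? ?]].
      exists (subst 0 e d); split.
      * apply par_subst; auto. eapply par_value; eauto.
      * apply par_beta; auto. eapply par_value; eauto.
    + destruct (IHpar1 _ HK) as [d [? ?]]. destruct (IHpar2 _ HW) as [e [? ?]].
      exists (subst 0 e d); split; apply par_subst; auto; eapply par_value; eauto.
Qed.

Lemma bstep_par : forall a b, bstep a b -> par a b.
Proof. intros a b H; induction H; try constructor; auto using par_refl. Qed.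

Lemma par_bstar : forall a b, par a b -> star bstep a b.
Proof.
  intros a b H; induction H; try apply star_refl.
  - apply (star_map bstep Lam); auto using b_lam.
  - eapply star_trans.
    + apply (star_map bstep (fun x => App x N)); eauto using b_appl.
    + apply (star_map bstep (fun x => App M' x)); eauto using b_appr.
  - eapply star_trans.
    + apply (star_map bstep (fun x => App (Lam x) V)); eauto using b_appl, b_lam.
    + eapply star_trans.
      * apply (star_map bstep (fun x => App (Lam M') x)); eauto using b_appr.
      * apply star_one. apply b_beta. eapply par_value; eauto.
Qed.

Lemma beta_confluent : confluent (star bstep).
Proof.
  apply (confluent_transfer bstep par bstep_par par_bstar).
  apply diamond_star, par_confluent.
Qed.

Lemma shift11_10 : forall P, shift 1 1 (shift 1 0 P) = shift 1 0 (shift 1 0 P).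
Proof. intros. rewrite !shift_comb by lia. reflexivity. Qed.

Lemma lift1_shift : forall P d c, lift1 (shift d c P) = shift d (S c) (lift1 P).
Proof. intros. unfold lift1. rewrite shift_comm by lia. f_equal; lia. Qed.

Lemma sstep_shift : forall M N, sstep M N -> forall d c, sstep (shift d c M) (shift d c N).
Proof.
  intros M N H; induction H; intros d c; simpl.
  - rewrite <- lift1_shift. apply s_1.
  - rewrite <- lift1_shift. apply s_3. apply shift_value; auto.
  - apply s_lam; auto.
  - apply s_appl; auto.
  - apply s_appr; auto.
Qed.

Lemma bstep_shift : forall M N, bstep M N -> forall d c, bstep (shift d c M) (shift d c N).
Proof.
  intros M N H; induction H; intros d c; simpl.
  - rewrite shift_subst by lia. rewrite Nat.sub_0_r. apply b_beta. apply shift_value; auto.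
  - apply b_lam; auto.
  - apply b_appl; auto.
  - apply b_appr; auto.
Qed.

Lemma lift1_subst : forall P u k, lift1 (subst k u P) = subst (S k) u (lift1 P).
Proof. intros. unfold lift1. rewrite subst_shift_comm by lia. reflexivity. Qed.

Lemma sstep_subst : forall M N, sstep M N -> forall k u, is_value u -> sstep (subst k u M) (subst k u N).
Proof.
  intros M N H; induction H; intros k u Hu; simpl.
  - rewrite <- lift1_subst. apply s_1.
  - rewrite <- lift1_subst. apply s_3. apply subst_value; auto.
  - apply s_lam; auto.
  - apply s_appl; auto.
  - apply s_appr; auto.
Qed.

Lemma sstar_subst_arg : forall t u u' k, sstep u u' -> star sstep (subst k u t) (subst k u' t).
Proof.
  induction t; intros u u' k H; simpl.
  - destruct (n <? k); [apply star_refl|]. destruct (n =? k); [|apply star_refl].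
    apply star_one. apply sstep_shift; auto.
  - apply (star_map sstep Lam); auto using s_lam.
  - eapply star_trans.
    + apply (star_map sstep (fun x => App x (subst k u t2))); eauto using s_appl.
    + apply (star_map sstep (fun x => App (subst k u' t1) x)); eauto using s_appr.
  - apply star_refl.
Qed.

Lemma sstep_value : forall V V', sstep V V' -> is_value V -> is_value V'.
Proof. intros V V' H; destruct H; simpl; intros; auto; contradiction. Qed.

Fixpoint sz (t : term) : nat :=
  match t with
  | Var _ => 2
  | Lam M => S (sz M)
  | App M N => sz M * sz N
  | Bot => 2
  end.

Lemma sz_ge2 : forall t, 2 <= sz t.
Proof. induction t; simpl; nia. Qed.

Lemma sz_shift : forall t d c, sz (shift d c t) = sz t.
Proof. induction t; intros; simpl; auto. destruct (n <? c); reflexivity. Qed.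

Lemma sstep_sz : forall a b, sstep a b -> sz b < sz a.
Proof.
  intros a b H; induction H; simpl; unfold lift1; rewrite ?sz_shift.
  - pose proof (sz_ge2 M); pose proof (sz_ge2 N); pose proof (sz_ge2 P). nia.
  - pose proof (sz_ge2 M); pose proof (sz_ge2 N); pose proof (sz_ge2 V). nia.
  - lia.
  - pose proof (sz_ge2 N). nia.
  - pose proof (sz_ge2 M). nia.
Qed.

Definition sjoin a b := exists d, star sstep a d /\ star sstep b d.

Lemma sjoin_sym : forall a b, sjoin a b -> sjoin b a.
Proof. intros a b [d [? ?]]; exists d; auto. Qed.

Lemma sjoin_refl : forall a, sjoin a a.
Proof. intros; exists a; split; apply star_refl. Qed.

Lemma sjoin_one : forall a b d, sstep a d -> sstep b d -> sjoin a b.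
Proof. intros; exists d; split; apply star_one; auto. Qed.

Ltac eqstar := match goal with |- star _ ?x ?y => replace x with y; [apply star_refl|] end.

Lemma root1 : forall M N P X, sstep (App (App (Lam M) N) P) X ->
  sjoin (App (Lam (App M (lift1 P))) N) X.
Proof.
  intros M N P X H. inversion H; subst.
  - apply sjoin_refl.
  - contradiction.
  - inversion H3; subst.
    +
      exists (App (Lam (App (Lam (App (shift 1 1 M) (lift1 (lift1 P)))) M0)) N0). split.
      * eapply star_step; [apply s_3; exact I|]. eqstar.
        unfold lift1; simpl. rewrite shift11_10. reflexivity.
      * eapply star_step; [apply s_1|]. eapply star_step; [apply s_appl, s_lam; unfold lift1 at 2; simpl; apply s_1|].
        eqstar. reflexivity.
    + inversion H4; subst. apply sjoin_one with (App (Lam (App M' (lift1 P))) N).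
      * apply s_appl, s_lam, s_appl; auto.
      * apply s_1.
    + apply sjoin_one with (App (Lam (App M (lift1 P))) N').
      * apply s_appr; auto.
      * apply s_1.
  - apply sjoin_one with (App (Lam (App M (lift1 N'))) N).
    + apply s_appl, s_lam, s_appr. apply sstep_shift; auto.
    + apply s_1.
Qed.

Lemma root3 : forall V M N X, is_value V -> sstep (App V (App (Lam M) N)) X ->
  sjoin (App (Lam (App (lift1 V) M)) N) X.
Proof.
  intros V M N X Hv H. inversion H; subst.
  - contradiction.
  - apply sjoin_refl.
  - apply sjoin_one with (App (Lam (App (lift1 M') M)) N).
    + apply s_appl, s_lam, s_appl. apply sstep_shift; auto.
    + apply s_3. eapply sstep_value; eauto.
  - inversion H3; subst.
    +
      exists (App (Lam (App (Lam (App (lift1 (lift1 V)) (shift 1 1 M))) M0)) N0). split.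
      * eapply star_step; [apply s_3; exact I|]. eqstar.
        unfold lift1; simpl. rewrite shift11_10. reflexivity.
      * eapply star_step; [apply s_3; auto|]. eapply star_step; [apply s_appl, s_lam; unfold lift1 at 2; simpl; apply s_3; apply shift_value; auto|].
        eqstar. reflexivity.
    + inversion H4; subst. apply sjoin_one with (App (Lam (App (lift1 V) M'0)) N).
      * apply s_appl, s_lam, s_appr; auto.
      * apply s_3; auto.
    + apply sjoin_one with (App (Lam (App (lift1 V) M)) N'0).
      * apply s_appr; auto.
      * apply s_3; auto.
Qed.

Lemma sjoin_lam : forall a b, sjoin a b -> sjoin (Lam a) (Lam b).
Proof. intros a b [d [? ?]]; exists (Lam d); split; apply (star_map sstep Lam); auto using s_lam. Qed.
Lemma sjoin_appl : forall a b N, sjoin a b -> sjoin (App a N) (App b N).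
Proof. intros a b N [d [? ?]]; exists (App d N); split; apply (star_map sstep (fun x => App x N)); auto using s_appl. Qed.
Lemma sjoin_appr : forall a b M, sjoin a b -> sjoin (App M a) (App M b).
Proof. intros a b M [d [? ?]]; exists (App M d); split; apply (star_map sstep (fun x => App M x)); auto using s_appr. Qed.

Lemma sigma_wcr : forall a b c, sstep a b -> sstep a c -> sjoin b c.
Proof.
  intros a b c H1. revert c. induction H1; intros c H2.
  - apply root1; auto.
  - apply root3; auto.
  - inversion H2; subst. apply sjoin_lam; auto.
  - inversion H2; subst.
    + apply sjoin_sym, root1; apply s_appl; auto.
    + apply sjoin_sym, root3; auto; apply s_appl; auto.
    + apply sjoin_appl; auto.
    + apply sjoin_one with (App M' N'); auto using s_appl, s_appr.
  - inversion H2; subst.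
    + apply sjoin_sym, root1; apply s_appr; auto.
    + apply sjoin_sym, root3; auto; apply s_appr; auto.
    + apply sjoin_one with (App M' N'); auto using s_appl, s_appr.
    + apply sjoin_appr; auto.
Qed.

Lemma sigma_confluent : confluent (star sstep).
Proof.
  assert (forall n a, sz a < n -> forall b c, star sstep a b -> star sstep a c -> sjoin b c).
  { induction n; intros a Ha b c Hb Hc; [lia|].
    destruct Hb as [|a b1 b Hab1 Hb1].
    - exists c; split; auto using star_refl.
    - destruct Hc as [|a c1 c Hac1 Hc1].
      + exists b; split; [apply star_refl|]. eapply star_step; eauto.
      + destruct (sigma_wcr _ _ _ Hab1 Hac1) as [d [Hd1 Hd2]].
        pose proof (sstep_sz _ _ Hab1). pose proof (sstep_sz _ _ Hac1).
        destruct (IHn b1 ltac:(lia) _ _ Hb1 Hd1) as [e [He1 He2]].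
        destruct (IHn c1 ltac:(lia) _ _ Hc1 (star_trans _ _ _ _ Hd2 He2)) as [f [Hf1 Hf2]].
        exists f; split; eauto using star_trans. }
  intros a b c Hb Hc. eapply H; eauto.
Qed.

Lemma shift_0 : forall t c, shift 0 c t = t.
Proof. induction t; intros; simpl; try f_equal; auto. destruct (n <? c); f_equal; lia. Qed.

Lemma subst_lift1 : forall t u, subst 0 u (lift1 t) = t.
Proof. intros. unfold lift1. rewrite subst_shift_cancel by lia. apply shift_0. Qed.

Lemma bstep_value : forall V V', bstep V V' -> is_value V -> is_value V'.
Proof. intros V V' H; destruct H; simpl; intros; auto; contradiction. Qed.

Definition bjoin N P := N = P \/ bstep N P.

Lemma commute1 : forall M L, bstep M L -> forall N, sstep M N ->
  exists P, star sstep L P /\ bjoin N P.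
Proof.
  intros M L H; induction H; intros X HX.
  - inversion HX; subst.
    + simpl in *; contradiction.
    + match goal with Hs : sstep (Lam M) _ |- _ => inversion Hs; subst end.
      eexists; split; [apply star_one; apply sstep_subst; eauto|].
      right. apply b_beta; auto.
    + eexists; split; [apply sstar_subst_arg; eauto|].
      right. apply b_beta. eapply sstep_value; eauto.
  - inversion HX; subst.
    match goal with Hs : sstep M _ |- _ => destruct (IHbstep _ Hs) as [P [HP1 HP2]] end.
    exists (Lam P); split; [apply (star_map sstep Lam); auto using s_lam|].
    destruct HP2 as [<-|HP2]; [left; auto| right; apply b_lam; auto].
  - inversion HX; subst.
    +
      inversion H; subst.
      * eexists; split; [apply star_refl|]. right.
        match goal with |- bstep ?x ?y => replace y with (subst 0 N0 (App M0 (lift1 N))) end.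
        -- apply b_beta; auto.
        -- simpl. rewrite subst_lift1. reflexivity.
      * match goal with Hs : bstep (Lam _) _ |- _ => inversion Hs; subst end.
        eexists; split; [apply star_one; apply s_1|].
        right. apply b_appl, b_lam, b_appl; auto.
      * eexists; split; [apply star_one; apply s_1|].
        right. apply b_appr; auto.
    +
      eexists; split; [apply star_one; apply s_3; eapply bstep_value; eauto|].
      right. apply b_appl, b_lam, b_appl. apply bstep_shift; auto.
    + match goal with Hs : sstep M _ |- _ => destruct (IHbstep _ Hs) as [P [HP1 HP2]] end.
      exists (App P N); split; [apply (star_map sstep (fun x => App x N)); auto using s_appl|].
      destruct HP2 as [<-|HP2]; [left; auto| right; apply b_appl; auto].
    + eexists; split; [apply star_one; apply s_appr; eauto|].
      right. apply b_appl; eauto.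
  - inversion HX; subst.
    + eexists; split; [apply star_one; apply s_1|].
      right. apply b_appl, b_lam, b_appr. apply bstep_shift; auto.
    + inversion H; subst.
      * eexists; split; [apply star_refl|]. right.
        match goal with |- bstep ?x ?y => replace y with (subst 0 N0 (App (lift1 M) M0)) end.
        -- apply b_beta; auto.
        -- simpl. rewrite subst_lift1. reflexivity.
      * match goal with Hs : bstep (Lam _) _ |- _ => inversion Hs; subst end.
        eexists; split; [apply star_one; apply s_3; auto|].
        right. apply b_appl, b_lam, b_appr; auto.
      * eexists; split; [apply star_one; apply s_3; auto|].
        right. apply b_appr; auto.
    + eexists; split; [apply star_one; apply s_appl; eauto|].
      right. apply b_appr; eauto.
    + match goal with Hs : sstep N _ |- _ => destruct (IHbstep _ Hs) as [P [HP1 HP2]] end.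
      exists (App M P); split; [apply (star_map sstep (fun x => App M x)); auto using s_appr|].
      destruct HP2 as [<-|HP2]; [left; auto| right; apply b_appr; auto].
Qed.

Lemma commA : forall M L, bstep M L -> forall N, star sstep M N ->
  exists P, star sstep L P /\ bjoin N P.
Proof.
  intros M L H N HN. revert L H. induction HN as [|a b c Hab Hbc IH]; intros L H.
  - exists L; split; [apply star_refl| right; auto].
  - destruct (commute1 _ _ H _ Hab) as [P1 [HP1 [<-|HP2]]].
    + exists c; split; [eapply star_trans; eauto| left; auto].
    + destruct (IH _ HP2) as [P [HP3 HP4]].
      exists P; split; eauto using star_trans.
Qed.

Lemma commB : forall M L, star bstep M L -> forall N, star sstep M N ->
  exists P, star sstep L P /\ star bstep N P.
Proof.
  intros M L H. induction H as [|a b c Hab Hbc IH]; intros N HN.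
  - exists N; split; [auto | apply star_refl].
  - destruct (commA _ _ Hab _ HN) as [P1 [HP1 HP2]].
    destruct (IH _ HP1) as [P [HP3 HP4]].
    exists P; split; auto.
    destruct HP2 as [<-|HP2]; [auto| eapply star_step; eauto].
Qed.

Definition RU a b := star bstep a b \/ star sstep a b.

Lemma RU_confluent : confluent RU.
Proof.
  intros a b c [Hb|Hb] [Hc|Hc].
  - destruct (beta_confluent _ _ _ Hb Hc) as [d [? ?]]. exists d; split; left; auto.
  - destruct (commB _ _ Hb _ Hc) as [d [? ?]]. exists d; split; [right|left]; auto.
  - destruct (commB _ _ Hc _ Hb) as [d [? ?]]. exists d; split; [left|right]; auto.
  - destruct (sigma_confluent _ _ _ Hb Hc) as [d [? ?]]. exists d; split; right; auto.
Qed.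

Lemma bstep_step : forall a b, bstep a b -> step a b.
Proof. intros a b H; induction H; constructor; auto. Qed.
Lemma sstep_step : forall a b, sstep a b -> step a b.
Proof. intros a b H; induction H; constructor; auto. Qed.

Lemma step_confluent : confluent (star step).
Proof.
  apply (confluent_transfer step RU).
  - intros a b H. induction H.
    + left. apply star_one. apply b_beta; auto.
    + right. apply star_one. apply s_1.
    + right. apply star_one. apply s_3; auto.
    + destruct IHstep; [left|right]; apply (star_map _ Lam); auto using b_lam, s_lam.
    + destruct IHstep; [left|right]; apply (star_map _ (fun x => App x N)); auto using b_appl, s_appl.
    + destruct IHstep; [left|right]; apply (star_map _ (fun x => App M x)); auto using b_appr, s_appr.
  - intros a b [H|H]; [apply (star_mono bstep step) | apply (star_mono sstep step)]; auto;
      intros; apply star_one; auto using bstep_step, sstep_step.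
  - apply diamond_star, RU_confluent.
Qed.

Lemma steps_star : forall a b, steps a b -> star step a b.
Proof.
  intros a b H; induction H; eauto using star_one, star_refl, star_trans.
Qed.

Lemma star_steps : forall a b, star step a b -> steps a b.
Proof.
  intros a b H; induction H; [apply rt_refl|]. eapply rt_trans; [apply rt_step|]; eauto.
Qed.

Lemma step_pure : forall a b, step a b -> pure a -> pure b.
Proof.
  intros a b H; induction H; simpl; unfold lift1; intuition;
    auto using subst_pure, shift_pure.
Qed.

Lemma star_pure : forall a b, star step a b -> pure a -> pure b.
Proof. intros a b H; induction H; eauto using step_pure. Qed.

Inductive ale : term -> term -> Prop :=
| ale_bot : ale Bot Bot
| ale_botv : forall t, is_value t -> ale Bot t
| ale_var : forall i, ale (Var i) (Var i)
| ale_lam : forall a b, ale a b -> ale (Lam a) (Lam b)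
| ale_app : forall a b c d, ale a b -> ale c d -> ale (App a c) (App b d).

Lemma ale_refl : forall t, ale t t.
Proof. induction t; constructor; auto. Qed.

Lemma ale_value : forall a b, ale a b -> is_value a -> is_value b.
Proof. intros a b H; destruct H; simpl; auto. Qed.

Lemma ale_trans : forall a b, ale a b -> forall c, ale b c -> ale a c.
Proof.
  intros a b H; induction H; intros e He.
  - exact He.
  - apply ale_botv. eapply ale_value; eauto.
  - exact He.
  - inversion He; subst; constructor; auto.
  - inversion He; subst; constructor; auto.
Qed.

Lemma approx_ale : forall a b, approx_le a b -> ale a b.
Proof.
  intros a b H; induction H.
  - apply ale_refl.
  - eapply ale_trans; eauto.
  - apply ale_botv; exact I.
  - apply ale_botv; exact I.
  - constructor; auto.
  - constructor; auto using ale_refl.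
  - constructor; auto using ale_refl.
Qed.

Lemma ale_approx : forall a b, ale a b -> approx_le a b.
Proof.
  intros a b H; induction H.
  - apply le_refl.
  - destruct t; simpl in H; try contradiction; constructor.
  - apply le_refl.
  - apply le_lam; auto.
  - eapply le_trans; [apply le_appl; eauto| apply le_appr; eauto].
Qed.

Definition notlamhead (t : term) := exists n1 n2, t = App n1 n2 /\ forall K, n1 <> Lam K.

Lemma spine_shape : forall s, is_spine s -> forall N, ale s N -> notlamhead N.
Proof.
  intros s H; induction H; intros N HN; inversion HN; subst.
  - match goal with Hv : ale (Var _) _ |- _ => inversion Hv; subst end.
    do 2 eexists; split; [reflexivity| intros K; discriminate].
  - match goal with Hv : ale s _ |- _ => destruct (IHis_spine _ Hv) as [n1 [n2 [-> _]]] end.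
    do 2 eexists; split; [reflexivity| intros K; discriminate].
Qed.

Lemma B_shape : forall b, is_B b -> forall N, ale b N -> forall K R, N <> App (Lam K) R.
Proof.
  intros b H N HN K R E; subst. destruct H.
  - inversion HN.
  - inversion HN.
  - inversion HN; subst. simpl in *; contradiction.
  - destruct (spine_shape _ H _ HN) as [n1 [n2 [E1 E2]]]. injection E1; intros; subst.
    eapply E2; eauto.
Qed.

Scheme is_A_mut := Minimality for is_A Sort Prop
with is_B_mut := Minimality for is_B Sort Prop
with is_spine_mut := Minimality for is_spine Sort Prop
with is_C_mut := Minimality for is_C Sort Prop.

Definition Pres (t : term) := forall N N', ale t N -> step N N' -> ale t N'.

Lemma ale_step_value : forall N N', step N N' -> is_value N -> is_value N'.
Proof. intros N N' H; destruct H; simpl; intros; auto; contradiction. Qed.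

Lemma pres_all : forall t, is_A t -> Pres t.
Proof.
  apply (is_A_mut Pres Pres Pres Pres); unfold Pres.
  - intros t _ IH N N' H1 H2; eauto.
  - intros t _ IH N N' H1 H2; eauto.
  - intros x N N' H1 H2. inversion H1; subst; inversion H2.
  - intros a _ IH N N' H1 H2. inversion H1; subst. inversion H2; subst. constructor; eauto.
  - intros N N' H1 H2. inversion H1; subst.
    + inversion H2.
    + apply ale_botv. eapply ale_step_value; eauto.
  - intros t _ IH N N' H1 H2; eauto.
  -
    intros x b Hb IH N N' H1 H2.
    inversion H1; subst.
    match goal with Hv : ale (Var _) _ |- _ => inversion Hv; subst end.
    inversion H2; subst.
    + exfalso. eapply B_shape; eauto.
    + match goal with Hs : step (Var _) _ |- _ => inversion Hs end.
    + constructor; eauto.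
  -
    intros s a Hs IHs Ha IHa N N' H1 H2.
    inversion H1; subst.
    match goal with Hv : ale s _ |- _ => destruct (spine_shape _ Hs _ Hv) as [n1 [n2 [-> Hn]]] end.
    inversion H2; subst;
      first [ exfalso; eapply Hn; reflexivity | simpl in *; contradiction | constructor; eauto ].
  -
    intros a s Ha IHa Hs IHs N N' H1 H2.
    inversion H1; subst.
    match goal with Hv : ale (Lam _) _ |- _ => inversion Hv; subst end.
    match goal with Hv : ale s _ |- _ => destruct (spine_shape _ Hs _ Hv) as [n1 [n2 [-> Hn]]] end.
    inversion H2; subst;
      try first [ exfalso; eapply Hn; reflexivity | simpl in *; contradiction ].
    + match goal with Hs : step (Lam _) _ |- _ => inversion Hs; subst end.
      constructor; [constructor|]; eauto.
    + constructor; eauto.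
Qed.

Lemma pres_star : forall A, is_A A -> forall N N', star step N N' -> ale A N -> ale A N'.
Proof.
  intros A HA N N' H; induction H; intros; auto.
  apply IHstar. eapply pres_all; eauto.
Qed.

Theorem lemma2p6 : forall M N : term, pure M -> pure N -> step M N ->
  forall A : term, approximants M A <-> approximants N A.
Proof.
  intros M N HM HN Hs A; unfold approximants; split.
  - intros [HA [N' [Hp [Hst Hle]]]]. split; auto.
    destruct (step_confluent M N N' (star_one _ _ _ Hs) (steps_star _ _ Hst)) as [Q [HQ1 HQ2]].
    exists Q; split; [eapply star_pure; eauto|]. split; [apply star_steps; auto|].
    apply ale_approx. eapply pres_star; eauto. apply approx_ale; auto.
  - intros [HA [N' [Hp [Hst Hle]]]]. split; auto.
    exists N'; split; auto. split; auto. eapply rt_trans; [apply rt_step; eauto| auto].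
Qed.
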